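(* Fix $\alpha\in(0,1)$ and $\nu\in(0,\alpha)$, and suppose the confidence regions at level $\alpha-\nu$, $\{C^{(\alpha-\nu)}_{\gamma\cdot\Gamma'}\}_{\Gamma'\subseteq\Gamma}$, are nested. Define the data-dependent set of targets $$\widehat\Gamma^+_\nu=\widehat\Gamma^+_\nu(y)=\bigcup_{P'\in B_\nu(y)}\Gamma_\nu(P')=\bigcup_{P'\in B_\nu(y)}\ \bigcup_{y'\in A_\nu(P')}\widehat\Gamma(y').$$ Then for every $P\in\mathcal P$, when $y\sim P$, $$P\left\{\theta_\gamma(P)\in C^{(\alpha-\nu)}_{\gamma\cdot\widehat\Gamma^+_\nu},\ \forall\gamma\in\widehat\Gamma(y)\right\}\ge 1-\alpha.$$
   Context: Let $\mathcal P$ be a (possibly nonparametric) family of distributions of an observation $y$. There is an index set $\Gamma$ of targets, and for each $P\in\mathcal P$ a family of estimands $\{\theta_\gamma(P)\}_{\gamma\in\Gamma}$. A selection rule $y\mapsto\widehat\Gamma(y)\subseteq\Gamma$ chooses a data-dependent set of targets. For every subset $\Gamma'\subseteq\Gamma$ and every level $\beta\in(0,1)$ we have confidence regions $\{C^{\beta}_{\gamma\cdot\Gamma'}\}_{\gamma\in\Gamma'}$ (functions of $y$) that are simultaneously valid: for every $P\in\mathcal P$, $P\{\theta_\gamma(P)\in C^{\beta}_{\gamma\cdot\Gamma'}\ \forall\gamma\in\Gamma'\}\ge1-\beta$. The regions at level $\beta$ are called nested if for all $\Gamma_1\subseteq\Gamma_2\subseteq\Gamma$ and all $\gamma\in\Gamma_1$,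 $C^\beta_{\gamma\cdot\Gamma_1}\subseteq C^\beta_{\gamma\cdot\Gamma_2}$. For each $P\in\mathcal P$ and $\nu\in(0,1)$, $A_\nu(P)$ is a set of observations with $P\{y\in A_\nu(P)\}\ge1-\nu$ (an acceptance region). The set of plausible targets under $P$ is $\Gamma_\nu(P)=\bigcup_{y'\in A_\nu(P)}\widehat\Gamma(y')$, and the inversion is $B_\nu(y)=\{P\in\mathcal P: y\in A_\nu(P)\}$. *)

(* Defs.v *)
From HB Require Import structures.
From mathcomp Require Import all_boot all_order all_algebra.
From mathcomp Require Import all_classical all_reals all_analysis.
Set Implicit Arguments. Unset Strict Implicit. Unset Printing Implicit Defensive.
Import Order.TTheory GRing.Theory Num.Theory.
Local Open Scope classical_set_scope.
Local Open Scope ring_scope.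

(* Coincides with P E when
   E is measurable. Used to read "P{ ... } >= c" without measurability
   assumptions. *)
Definition inner_prob {d} {Y : measurableType d} {R : realType}
  (P : probability Y R) (E : set Y) : \bar R :=
  ereal_sup [set P F | F in [set F | measurable F /\ F `<=` E]].

Definition plausible_targets {d} {Y : measurableType d} {R : realType} {Gamma : Type}
  (Ghat : Y -> set Gamma) (A : R -> probability Y R -> set Y)
  (nu : R) (P : probability Y R) : set Gamma :=
  \bigcup_(y' in A nu P) Ghat y'.

Definition inversion {d} {Y : measurableType d} {R : realType}
  (Pfam : set (probability Y R)) (A : R -> probability Y R -> set Y)
  (nu : R) (y : Y) : set (probability Y R) :=
  [set P' | Pfam P' /\ A nu P' y].

Definition Gamma_plus {d} {Y : measurableType d} {R : realType} {Gamma : Type}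
  (Pfam : set (probability Y R)) (Ghat : Y -> set Gamma)
  (A : R -> probability Y R -> set Y) (nu : R) (y : Y) : set Gamma :=
  \bigcup_(P' in inversion Pfam A nu y) plausible_targets Ghat A nu P'.

Definition nested {R : realType} {Gamma Y Theta : Type}
  (C : R -> set Gamma -> Gamma -> Y -> set Theta) (beta : R) : Prop :=
  forall (G1 G2 : set Gamma), G1 `<=` G2 ->
    forall g, G1 g -> forall y, C beta G1 g y `<=` C beta G2 g y.

(* Main.v *)
Require Import Defs.
From HB Require Import structures.
From mathcomp Require Import all_boot all_order all_algebra.
From mathcomp Require Import all_classical all_reals all_analysis.
From mathcomp Require Import lra.
Import Order.TTheory GRing.Theory Num.Theory.
Local Open Scope classical_set_scope.
Local Open Scope ring_scope.

Lemma inner_mono {d} {Y : measurableType d} {R : realType} (P : probability Y R) E E' :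
  E `<=` E' -> (inner_prob P E <= inner_prob P E')%E.
Proof.
move=> EE; apply: ereal_sup_le => _ [F [mF FE] <-]; exists F => //; split => //.
exact: subset_trans EE.
Qed.

Lemma inner_I {d} {Y : measurableType d} {R : realType} (P : probability Y R) E1 E2 (a b : R) :
  (a%:E <= inner_prob P E1)%E -> (b%:E <= inner_prob P E2)%E ->
  ((a + b - 1)%:E <= inner_prob P (E1 `&` E2))%E.
Proof.
move=> h1 h2; apply/lee_addgt0Pr => e e0.
have [y1 [F1 [mF1 F1E] <-] lt1] : exists2 y, [set P F | F in [set F | measurable F /\ F `<=` E1]] y & ((a - e/2)%:E < y)%E.
  apply: ereal_sup_gt; apply: lt_le_trans h1; rewrite lte_fin; lra.
have [y2 [F2 [mF2 F2E] <-] lt2] : exists2 y, [set P F | F in [set F | measurable F /\ F `<=` E2]] y & ((b - e/2)%:E < y)%E.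
  apply: ereal_sup_gt; apply: lt_le_trans h2; rewrite lte_fin; lra.
have mI : measurable (F1 `&` F2) by exact: measurableI.
have hI : (P (F1 `&` F2) <= inner_prob P (E1 `&` E2))%E.
  apply: ereal_sup_ubound; exists (F1 `&` F2) => //; split => //.
  by move=> y [/F1E ? /F2E ?].
apply: le_trans (leeD2r _ hI).
have f1 := fin_num_measure P _ mF1.
have f2 := fin_num_measure P _ mF2.
have fI := fin_num_measure P _ mI.
have U1 := probability_le1 P (measurableU _ _ mF1 mF2).
rewrite measureUfinl // in U1; last by rewrite ltey_eq f1.
have U2 : fine (P F1) + fine (P F2) - fine (P (F1 `&` F2)) <= 1.
  by rewrite -lee_fin EFinB EFinD !fineK.
move: lt1 lt2; rewrite -(fineK f1) -(fineK f2) -(fineK fI) !lte_fin -EFinD lee_fin.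
lra.
Qed.
Theorem theorem1 (R : realType) (d : measure_display) (Y : measurableType d)
  (Pfam : set (probability Y R)) (Gamma Theta : Type)
  (theta : probability Y R -> Gamma -> Theta)
  (Ghat : Y -> set Gamma)
  (C : R -> set Gamma -> Gamma -> Y -> set Theta)
  (A : R -> probability Y R -> set Y)
  (C_valid : forall (G' : set Gamma) (beta : R), 0 < beta < 1 ->
     forall P, Pfam P ->
       ((1 - beta)%:E <= inner_prob P
          [set y | forall g, G' g -> C beta G' g y (theta P g)])%E)
  (A_accept : forall P, Pfam P -> forall nu : R, 0 < nu < 1 ->
       ((1 - nu)%:E <= inner_prob P (A nu P))%E)
  (alpha nu : R) (halpha : 0 < alpha < 1) (hnu : 0 < nu < alpha)
  (hnest : nested C (alpha - nu)) :
  forall P, Pfam P ->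
    ((1 - alpha)%:E <= inner_prob P
       [set y | forall g, Ghat y g ->
          C (alpha - nu)%R (Gamma_plus Pfam Ghat A nu y) g y (theta P g)])%E.
Proof.
move=> P PP.
set beta := alpha - nu.
set G' := plausible_targets Ghat A nu P.
have hb : 0 < beta < 1 by rewrite /beta; apply/andP; split; lra.
have hn : 0 < nu < 1 by apply/andP; split; lra.
have := @inner_I _ _ _ P _ _ _ _ (A_accept P PP nu hn) (C_valid G' beta hb P PP).
have -> : 1 - nu + (1 - beta) - 1 = 1 - alpha by rewrite /beta; lra.
move=> h; apply: le_trans h _; apply: inner_mono.
move=> y [Ay Cy] g Gg.
have G'g : G' g by exists y.
have sub : G' `<=` Gamma_plus Pfam Ghat A nu y.
  by move=> g' hg'; exists P => //; split.
exact: (hnest G' _ sub g G'g y _ (Cy g G'g)).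
Qed.
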